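(* The Muchnik degrees of pandemic numberings and of hyperimmune sets coincide: for every oracle $X\subseteq\omega$, $X$ computes a pandemic numbering if and only if $X$ computes a hyperimmune set.
   Context: A numbering of the finite subsets of $\omega$ is a map $e\mapsto D_e$ from $\omega$ onto the finite subsets of $\omega$; an oracle $X$ computes such a numbering if the relation $\{(e,x): x\in D_e\}$ and the function $e\mapsto\max D_e$ (equivalently, $e\mapsto$ a canonical code of $D_e$) are $X$-computable. An order function is a recursive, nondecreasing, unbounded $h:\omega\to\omega$ with $h(0)\ge2$. For a numbering $D$ and $R\subseteq\omega$, $D$ is $h$-endemic to $R$ if there are infinitely many $e$ with $|D_e|\ge h(e)$ and $D_e\subseteq R$. $D$ is a pandemic numbering if there is an order function $h$ such that $D$ is $h$-endemic to every infinite recursive set $R$. A set $H\subseteq\omega$ is hyperimmune if it is infinite and the function enumerating its elements in increasing order is not dominated by any recursive function. *)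

(* Defs.v *)
From mathcomp Require Import all_boot.
Set Implicit Arguments. Unset Strict Implicit. Unset Printing Implicit Defensive.

Definition oracle := nat -> bool.

Definition cpair (a b : nat) : nat := ((a + b) * (a + b).+1) %/ 2 + b.

Inductive code : Type :=
| cZero
| cSucc
| cId
| cFst
| cSnd
| cOracle
| cComp (f g : code)
| cPair (f g : code)
| cRec  (f g : code)
| cMu   (f : code).

Inductive eval (X : oracle) : code -> nat -> nat -> Prop :=
| ev_zero x : eval X cZero x 0
| ev_succ x : eval X cSucc x x.+1
| ev_id x : eval X cId x x
| ev_fst a b : eval X cFst (cpair a b) a
| ev_snd a b : eval X cSnd (cpair a b) b
| ev_oracle x : eval X cOracle x (nat_of_bool (X x))
| ev_comp f g x y z : eval X g x y -> eval X f y z -> eval X (cComp f g) x z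
| ev_pair f g x y z : eval X f x y -> eval X g x z -> eval X (cPair f g) x (cpair y z)
| ev_rec0 f g x y : eval X f x y -> eval X (cRec f g) (cpair x 0) y
| ev_recS f g x n y z :
    eval X (cRec f g) (cpair x n) y ->
    eval X g (cpair x (cpair n y)) z ->
    eval X (cRec f g) (cpair x n.+1) z
| ev_mu f x n :
    eval X f (cpair x n) 0 ->
    (forall m, m < n -> exists k, eval X f (cpair x m) k.+1) ->
    eval X (cMu f) x n.

Definition computable_in (X : oracle) (f : nat -> nat) : Prop :=
  exists c : code, forall x, eval X c x (f x).

Definition set_computable_in (X : oracle) (A : nat -> bool) : Prop :=
  computable_in X (fun x => nat_of_bool (A x)).

Definition rel_computable_in (X : oracle) (R : nat -> nat -> bool) : Prop :=
  exists c : code, forall a b, eval X c (cpair a b) (nat_of_bool (R a b)).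

Definition empty_oracle : oracle := fun _ => false.
Definition recursive (f : nat -> nat) : Prop := computable_in empty_oracle f.
Definition recursive_set (A : nat -> bool) : Prop := set_computable_in empty_oracle A.

(* Finite sets via canonical codes: the finite set with canonical index c is
   { x | bit x of c is 1 }, i.e. c = sum_{x in D} 2^x. *)
Definition canset (c : nat) : nat -> bool := fun x => odd (c %/ 2 ^ x).

(* A numbering of the finite subsets of omega, presented by e |-> canonical
   code of D_e.  D_e := canset (D e). *)
Definition numbering (D : nat -> nat) : Prop :=
  forall s : seq nat, exists e, forall x, canset (D e) x = (x \in s).

Definition computes_numbering (X : oracle) (D : nat -> nat) : Prop :=
  rel_computable_in X (fun e x => canset (D e) x) /\ computable_in X D.

Definition infinite_set (A : nat -> bool) : Prop :=
  forall N, exists x, N <= x /\ A x.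

Definition order_function (h : nat -> nat) : Prop :=
  recursive h /\ (forall m n, m <= n -> h m <= h n) /\
  (forall N, exists n, N <= h n) /\ 2 <= h 0.

Definition card_geq (A : nat -> bool) (k : nat) : Prop :=
  exists s : seq nat, uniq s /\ k <= size s /\ all A s.

Definition subset_of (A B : nat -> bool) : Prop := forall x, A x -> B x.

Definition endemic (h : nat -> nat) (D : nat -> nat) (R : nat -> bool) : Prop :=
  forall N, exists e, N <= e /\ card_geq (canset (D e)) (h e) /\ subset_of (canset (D e)) R.

Definition pandemic (D : nat -> nat) : Prop :=
  exists h, order_function h /\
    forall R, infinite_set R -> recursive_set R -> endemic h D R.

Definition enumerates (p : nat -> nat) (H : nat -> bool) : Prop :=
  (forall n, p n < p n.+1) /\ (forall x, H x <-> exists n, p n = x).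

Definition dominates (g p : nat -> nat) : Prop :=
  exists N, forall n, N <= n -> p n <= g n.

Definition hyperimmune (H : nat -> bool) : Prop :=
  infinite_set H /\
  forall p, enumerates p H -> ~ exists g, recursive g /\ dominates g p.

(* Main.v *)
Require Import Defs.
From mathcomp Require Import all_boot.
From mathcomp Require Import zify.
From Stdlib Require Import Classical FunctionalExtensionality.
Set Implicit Arguments. Unset Strict Implicit. Unset Printing Implicit Defensive.

Definition nxt (p : nat * nat) : nat * nat :=
  match p.1 with a'.+1 => (a', p.2.+1) | 0 => (p.2.+1, 0) end.
Definition unpair (w : nat) : nat * nat := iter w nxt (0,0).
Definition pfst w := (unpair w).1.
Definition psnd w := (unpair w).2.

Lemma tri_S s : (s.+1 * s.+2) %/ 2 = (s * s.+1) %/ 2 + s.+1.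
Proof.
have -> : s.+1 * s.+2 = s * s.+1 + s.+1 * 2 by nia.
by rewrite divnDr ?dvdn_mull // mulnK.
Qed.

Lemma cpair_nxt p : cpair (nxt p).1 (nxt p).2 = (cpair p.1 p.2).+1.
Proof.
case: p => [[|a] b]; rewrite /nxt /cpair /=.
- rewrite !addn0 add0n tri_S; lia.
- rewrite addSn addnS; lia.
Qed.

Lemma cpair_unpair w : cpair (pfst w) (psnd w) = w.
Proof.
rewrite /pfst /psnd /unpair; elim: w => [|w IH] //=.
by rewrite cpair_nxt IH.
Qed.

Lemma cpair0 a b : cpair a b = 0 -> a = 0 /\ b = 0.
Proof.
rewrite /cpair => H; have : b = 0 by lia.
move=> Hb; subst b; rewrite addn0 in H; split=> //.
case: a H => // a H; rewrite addn0 in H.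
have : 1 <= a.+1 * a.+2 %/ 2 by rewrite leq_divRL //; nia.
by rewrite H.
Qed.

Lemma unpair_cpair a b : unpair (cpair a b) = (a, b).
Proof.
move: {2}(cpair a b) (erefl (cpair a b)) => n; elim: n a b => [|n IH] a b.
  by move=> /cpair0 [-> ->].
case: b => [|b] H.
- case: a H => [|a] H.
    by move: H; rewrite /cpair.
  have H' : cpair 0 a = n.
    have := cpair_nxt (0, a); rewrite /nxt /= => E.
    by apply: succn_inj; rewrite -E H.
  by rewrite H /unpair iterS -/(unpair n) -H' (IH _ _ H') /nxt.
- have H' : cpair a.+1 b = n.
    have := cpair_nxt (a.+1, b); rewrite /nxt /= => E.
    by apply: succn_inj; rewrite -E H.
  by rewrite H /unpair iterS -/(unpair n) -H' (IH _ _ H') /nxt.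
Qed.

Lemma pfst_cpair a b : pfst (cpair a b) = a.
Proof. by rewrite /pfst unpair_cpair. Qed.
Lemma psnd_cpair a b : psnd (cpair a b) = b.
Proof. by rewrite /psnd unpair_cpair. Qed.

Lemma cpair_geq_r a b : b <= cpair a b.
Proof. rewrite /cpair; lia. Qed.
Lemma cpair_geq_l a b : a <= cpair a b.
Proof.
rewrite /cpair.
have : a <= (a + b) * (a + b).+1 %/ 2.
  case: a => [|a] //.
  rewrite leq_divRL //; nia.
lia.
Qed.

Notation cmp := computable_in.
Definition compb X (P : nat -> bool) := cmp X (fun x => nat_of_bool (P x)).

Fixpoint prec (b : nat) (s : nat -> nat -> nat) (n : nat) : nat :=
  match n with 0 => b | k.+1 => s k (prec b s k) end.

Lemma eval_fst X w : eval X cFst w (pfst w).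
Proof. by have := ev_fst X (pfst w) (psnd w); rewrite cpair_unpair. Qed.
Lemma eval_snd X w : eval X cSnd w (psnd w).
Proof. by have := ev_snd X (pfst w) (psnd w); rewrite cpair_unpair. Qed.

Lemma comp_ext X f g : (forall x, f x = g x) -> cmp X f -> cmp X g.
Proof. by move=> E [c Hc]; exists c => x; rewrite -E. Qed.

Lemma comp_id X : cmp X (fun x => x).
Proof. by exists cId => x; constructor. Qed.

Lemma comp_const X n : cmp X (fun _ => n).
Proof.
exists (iter n (cComp cSucc) cZero) => x; elim: n => [|n IH] /=; first by constructor.
by apply: ev_comp IH _; constructor.
Qed.

Lemma comp_compose X f A : cmp X f -> cmp X A -> cmp X (fun x => f (A x)).
Proof. by move=> [cf Hf] [cA HA]; exists (cComp cf cA) => x; apply: ev_comp. Qed.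

Lemma comp_S X A : cmp X A -> cmp X (fun x => (A x).+1).
Proof. move=> HA; apply: comp_compose HA; by exists cSucc => x; constructor. Qed.

Lemma comp_cpair X A B : cmp X A -> cmp X B -> cmp X (fun x => cpair (A x) (B x)).
Proof. by move=> [cA HA] [cB HB]; exists (cPair cA cB) => x; apply: ev_pair. Qed.

Lemma comp_pfst X A : cmp X A -> cmp X (fun x => pfst (A x)).
Proof. move=> HA; apply: comp_compose HA; exists cFst => x; exact: eval_fst. Qed.
Lemma comp_psnd X A : cmp X A -> cmp X (fun x => psnd (A x)).
Proof. move=> HA; apply: comp_compose HA; exists cSnd => x; exact: eval_snd. Qed.

Lemma comp_orac X A : cmp X A -> compb X (fun x => X (A x)).
Proof. move=> HA; apply: (comp_compose (f := fun x => nat_of_bool (X x))) HA.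
by exists cOracle => x; constructor. Qed.

Lemma comp_prec X F S N : cmp X F ->
  cmp X (fun z => S (pfst z) (pfst (psnd z)) (psnd (psnd z))) -> cmp X N ->
  cmp X (fun x => prec (F x) (S x) (N x)).
Proof.
move=> [cF HF] [cS HS] [cN HN]; exists (cComp (cRec cF cS) (cPair cId cN)) => x.
apply: ev_comp; first by apply: ev_pair; [constructor | apply: HN].
elim: (N x) => [|n IH] /=; first by constructor.
apply: ev_recS IH _.
by have := HS (cpair x (cpair n (prec (F x) (S x) n))); rewrite !(pfst_cpair, psnd_cpair).
Qed.

Lemma comp_mu X (F : nat -> nat -> nat) M : cmp X (fun z => F (pfst z) (psnd z)) ->
  (forall x, F x (M x) = 0 /\ forall m, m < M x -> F x m <> 0) -> cmp X M.
Proof.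
move=> [cF HF] HM; exists (cMu cF) => x; case: (HM x) => H0 H1.
constructor.
  by have := HF (cpair x (M x)); rewrite pfst_cpair psnd_cpair H0.
move=> m Hm; exists (F x m).-1.
have := HF (cpair x m); rewrite pfst_cpair psnd_cpair prednK //.
by case: (F x m) (H1 _ Hm).
Qed.

Lemma comp_app2 X (g : nat -> nat -> nat) A B : cmp X (fun z => g (pfst z) (psnd z)) ->
  cmp X A -> cmp X B -> cmp X (fun x => g (A x) (B x)).
Proof.
move=> Hg HA HB.
apply: comp_ext (comp_compose Hg (comp_cpair HA HB)) => x.
by rewrite pfst_cpair psnd_cpair.
Qed.

Lemma comp_z1 X : cmp X pfst. Proof. exact: (comp_pfst (comp_id X)). Qed.
Lemma comp_z2 X : cmp X psnd. Proof. exact: (comp_psnd (comp_id X)). Qed.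

Lemma comp_iter_prec X F S N : cmp X F ->
  cmp X (fun z => S (pfst z) (psnd (psnd z))) -> cmp X N ->
  cmp X (fun x => prec (F x) (fun _ acc => S x acc) (N x)).
Proof.
move=> HF HS HN; exact: (comp_prec (S := fun x _ acc => S x acc) HF HS HN).
Qed.

Lemma comp_add X A B : cmp X A -> cmp X B -> cmp X (fun x => A x + B x).
Proof.
move=> HA HB; apply: comp_app2 HA HB.
have H := comp_iter_prec (S := fun _ acc => acc.+1) (comp_z1 X) (comp_S (comp_psnd (comp_z2 X))) (comp_z2 X).
apply: comp_ext H => z; elim: (psnd z) => [|n IH] /=; by rewrite ?addn0 // addnS -IH.
Qed.

Lemma comp_pred X A : cmp X A -> cmp X (fun x => (A x).-1).
Proof.
move=> HA; apply: comp_compose HA.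
have H := comp_prec (N := id) (S := fun _ k _ => k) (comp_const X 0) (comp_pfst (comp_z2 X)) (comp_id X).
by apply: comp_ext H => z; case: z.
Qed.

Lemma comp_sub X A B : cmp X A -> cmp X B -> cmp X (fun x => A x - B x).
Proof.
move=> HA HB; apply: comp_app2 HA HB.
have H := comp_iter_prec (S := fun _ acc => acc.-1) (comp_z1 X) (comp_pred (comp_psnd (comp_z2 X))) (comp_z2 X).
apply: comp_ext H => z; elim: (psnd z) => /= [|n ->]; by rewrite ?subn0 ?subnS.
Qed.

Lemma comp_mul X A B : cmp X A -> cmp X B -> cmp X (fun x => A x * B x).
Proof.
move=> HA HB; apply: comp_app2 HA HB.
have H := comp_iter_prec (F := fun _ => 0) (S := fun x acc => acc + pfst x) (comp_const X 0)
   (comp_add (comp_psnd (comp_z2 X)) (comp_pfst (comp_z1 X))) (comp_z2 X).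
apply: comp_ext H => z; elim: (psnd z) => /= [|n ->]; by rewrite ?muln0 ?mulnS // addnC.
Qed.

Lemma comp_exp X A B : cmp X A -> cmp X B -> cmp X (fun x => A x ^ B x).
Proof.
move=> HA HB; apply: comp_app2 HA HB.
have H := comp_iter_prec (F := fun _ => 1) (S := fun x acc => acc * pfst x) (comp_const X 1)
   (comp_mul (comp_psnd (comp_z2 X)) (comp_pfst (comp_z1 X))) (comp_z2 X).
apply: comp_ext H => z; elim: (psnd z) => /= [|n ->]; by rewrite ?expn0 ?expnS // mulnC.
Qed.

Lemma comp_iter X N (f : nat -> nat -> nat) W : cmp X N ->
  cmp X (fun z => f (pfst z) (psnd z)) -> cmp X W ->
  cmp X (fun x => iter (N x) (f x) (W x)).
Proof.
move=> HN Hf HW.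
have Hf' : cmp X (fun z => f (pfst z) (psnd (psnd z))).
  apply: comp_ext (comp_compose Hf (comp_cpair (comp_z1 X) (comp_psnd (comp_z2 X)))) => z.
  by rewrite pfst_cpair psnd_cpair.
have H := comp_iter_prec (S := f) HW Hf' HN.
by apply: comp_ext H => x; elim: (N x) => //= n ->.
Qed.

Lemma compb_comp X P : compb X P -> cmp X (fun x => nat_of_bool (P x)).
Proof. by []. Qed.

Lemma compb_const X b : compb X (fun _ => b).
Proof. exact: comp_const. Qed.

Lemma compb_leq X A B : cmp X A -> cmp X B -> compb X (fun x => A x <= B x).
Proof.
move=> HA HB; apply: comp_ext (comp_sub (comp_const X 1) (comp_sub HA HB)) => x.
by case: leqP => H; lia.
Qed.

Lemma compb_eq X A B : cmp X A -> cmp X B -> compb X (fun x => A x == B x :> nat).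
Proof.
move=> HA HB; apply: comp_ext (comp_sub (comp_const X 1) (comp_add (comp_sub HA HB) (comp_sub HB HA))) => x.
by case: eqP => H; lia.
Qed.

Lemma compb_and X P Q : compb X P -> compb X Q -> compb X (fun x => P x && Q x).
Proof. move=> HP HQ; apply: comp_ext (comp_mul HP HQ) => x; by case: (P x); case: (Q x). Qed.

Lemma compb_or X P Q : compb X P -> compb X Q -> compb X (fun x => P x || Q x).
Proof.
move=> HP HQ; apply: comp_ext (comp_sub (comp_const X 1) (comp_mul (comp_sub (comp_const X 1) HP) (comp_sub (comp_const X 1) HQ))) => x.
by case: (P x); case: (Q x).
Qed.

Lemma compb_neg X P : compb X P -> compb X (fun x => ~~ P x).
Proof. move=> HP; apply: comp_ext (comp_sub (comp_const X 1) HP) => x; by case: (P x). Qed.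

Lemma comp_ite X P A B : compb X P -> cmp X A -> cmp X B ->
  cmp X (fun x => if P x then A x else B x).
Proof.
move=> HP HA HB; apply: comp_ext (comp_add (comp_mul HP HA) (comp_mul (comp_sub (comp_const X 1) HP) HB)) => x.
by case: (P x) => /=; rewrite ?mul1n ?mul0n ?addn0.
Qed.

Lemma compb_ite X P A B : compb X P -> compb X A -> compb X B ->
  compb X (fun x => if P x then A x else B x).
Proof.
move=> HP HA HB; apply: comp_ext (comp_ite HP HA HB) => x; by case: (P x).
Qed.

Lemma compb_odd X A : cmp X A -> compb X (fun x => odd (A x)).
Proof.
move=> HA; apply: (comp_compose (f := fun n => nat_of_bool (odd n))) HA.
have H := comp_prec (N := id) (S := fun _ _ acc => 1 - acc) (comp_const X 0)
    (comp_sub (comp_const X 1) (comp_psnd (comp_z2 X))) (comp_id X).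
apply: comp_ext H => z; elim: z => //= n ->; by case: (odd n).
Qed.

Definition bcount n (P : nat -> bool) := count P (iota 0 n).
Definition bex n (P : nat -> bool) := has P (iota 0 n).
Definition ball n (P : nat -> bool) := all P (iota 0 n).

Lemma iotaSr n : iota 0 n.+1 = rcons (iota 0 n) n.
Proof. by rewrite -addn1 iotaD /= cats1. Qed.

Lemma comp_bcount X N (P : nat -> nat -> bool) : cmp X N ->
  compb X (fun z => P (psnd z) (pfst z)) -> cmp X (fun x => bcount (N x) (P x)).
Proof.
move=> HN HP.
have HP' : cmp X (fun z => psnd (psnd z) + nat_of_bool (P (pfst z) (pfst (psnd z)))).
  apply: comp_add; first exact: comp_psnd (comp_z2 X).
  apply: comp_ext (comp_compose HP (comp_cpair (comp_pfst (comp_z2 X)) (comp_z1 X))) => z.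
  by rewrite pfst_cpair psnd_cpair.
have H := comp_prec (S := fun x k acc => acc + nat_of_bool (P x k)) (comp_const X 0) HP' HN.
apply: comp_ext H => x; rewrite /bcount; elim: (N x) => // n IH.
by rewrite iotaSr -cats1 count_cat /= addn0 -IH.
Qed.

Lemma compb_bex X N (P : nat -> nat -> bool) : cmp X N ->
  compb X (fun z => P (psnd z) (pfst z)) -> compb X (fun x => bex (N x) (P x)).
Proof.
move=> HN HP; apply: comp_ext (compb_leq (comp_const X 1) (comp_bcount HN HP)) => x.
by rewrite /bex /bcount has_count.
Qed.

Lemma compb_ball X N (P : nat -> nat -> bool) : cmp X N ->
  compb X (fun z => P (psnd z) (pfst z)) -> compb X (fun x => ball (N x) (P x)).
Proof.
move=> HN HP.
have HP' : compb X (fun z => ~~ P (psnd z) (pfst z)) by apply: compb_neg.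
apply: comp_ext (compb_neg (compb_bex (P := fun x y => ~~ P x y) HN HP')) => x.
rewrite /bex /ball -all_predC; congr nat_of_bool; by apply: eq_all => y /=; rewrite negbK.
Qed.

Lemma filter_iota_lt d n : d <= n -> [seq q <- iota 0 n | q < d] = iota 0 d.
Proof.
move=> Hle; rewrite -(subnKC Hle) iotaD filter_cat.
rewrite (@eq_in_filter _ _ predT) ?filter_predT; last by move=> q; rewrite mem_iota /=.
rewrite (@eq_in_filter _ _ pred0) ?filter_pred0 ?cats0 // => q; rewrite mem_iota /= add0n.
by move=> /andP [H1 _]; rewrite ltnNge H1.
Qed.

Lemma comp_div X A B : cmp X A -> cmp X B -> cmp X (fun x => A x %/ B x).
Proof.
move=> HA HB.
have H : cmp X (fun x => if B x == 0 then 0 else bcount (A x) (fun q => q.+1 * B x <= A x)).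
  apply comp_ite; first exact: (compb_eq HB (comp_const X 0)).
    exact: comp_const.
  apply (comp_bcount (P := fun x q => q.+1 * B x <= A x) HA).
  apply: compb_leq; last exact: (comp_compose HA (comp_z2 X)).
  exact: (comp_mul (comp_S (comp_z1 X)) (comp_compose HB (comp_z2 X))).
apply: comp_ext H => x; case: eqP => [->|/eqP Hb]; first by rewrite divn0.
rewrite /bcount.
have -> : count (fun q => q.+1 * B x <= A x) (iota 0 (A x)) = count (fun q => q < A x %/ B x) (iota 0 (A x)).
  by apply: eq_count => q; rewrite leq_divRL // lt0n.
have Hle : A x %/ B x <= A x by apply: leq_div.
rewrite -size_filter.
rewrite filter_iota_lt //.
by rewrite size_iota.
Qed.

Definition ite {T} (b : bool) (x y : T) := if b then x else y.
Lemma comp_ite' (X : oracle) (P : nat -> bool) (A B : nat -> nat) : compb X P -> cmp X A -> cmp X B ->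
  cmp X (fun x => ite (P x) (A x) (B x)).
Proof. exact: comp_ite. Qed.
Lemma compb_ite' (X : oracle) (P A B : nat -> bool) : compb X P -> compb X A -> compb X B ->
  compb X (fun x => ite (P x) (A x) (B x)).
Proof. exact: compb_ite. Qed.

Ltac solve_comp_ext := fail.

Ltac solve_comp :=
  cbv beta;
  first [ assumption | solve_comp_ext
  | lazymatch goal with
  | |- cmp _ (fun _ => ?c) => apply comp_const
  | |- compb _ (fun _ => ?c) => apply compb_const
  | |- cmp _ (fun x => x) => apply comp_id
  | |- cmp _ (fun x => nat_of_bool (@?P x)) => apply (compb_comp (P := P)); solve_comp
  | |- cmp _ (fun x => (@?A x).+1) => apply (comp_S (A := A)); solve_comp
  | |- cmp _ (fun x => (@?A x).-1) => apply (comp_pred (A := A)); solve_comp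
  | |- cmp _ (fun x => @?A x + @?B x) => apply (comp_add (A := A) (B := B)); solve_comp
  | |- cmp _ (fun x => @?A x - @?B x) => apply (comp_sub (A := A) (B := B)); solve_comp
  | |- cmp _ (fun x => @?A x * @?B x) => apply (comp_mul (A := A) (B := B)); solve_comp
  | |- cmp _ (fun x => @?A x ^ @?B x) => apply (comp_exp (A := A) (B := B)); solve_comp
  | |- cmp _ (fun x => @?A x %/ @?B x) => apply (comp_div (A := A) (B := B)); solve_comp
  | |- cmp _ (fun x => cpair (@?A x) (@?B x)) => apply (comp_cpair (A := A) (B := B)); solve_comp
  | |- cmp _ (fun x => pfst (@?A x)) => apply (comp_pfst (A := A)); solve_comp
  | |- cmp _ (fun x => psnd (@?A x)) => apply (comp_psnd (A := A)); solve_comp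
  | |- cmp _ (fun x => ite (@?P x) (@?A x) (@?B x)) =>
        apply (comp_ite' (P := P) (A := A) (B := B)); solve_comp
  | |- cmp _ (fun x => prec (@?F x) (@?S x) (@?N x)) =>
        apply (comp_prec (F := F) (S := S) (N := N)); solve_comp
  | |- cmp _ (fun x => iter (@?N x) (@?f x) (@?W x)) =>
        apply (comp_iter (N := N) (f := f) (W := W)); solve_comp
  | |- cmp _ (fun x => bcount (@?N x) (@?P x)) =>
        apply (comp_bcount (N := N) (P := P)); solve_comp
  | |- compb _ (fun x => @?A x && @?B x) => apply (compb_and (P := A) (Q := B)); solve_comp
  | |- compb _ (fun x => @?A x || @?B x) => apply (compb_or (P := A) (Q := B)); solve_comp
  | |- compb _ (fun x => ~~ @?A x) => apply (compb_neg (P := A)); solve_comp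
  | |- compb _ (fun x => @?A x <= @?B x) => apply (compb_leq (A := A) (B := B)); solve_comp
  | |- compb _ (fun x => @?A x == @?B x) => apply (compb_eq (A := A) (B := B)); solve_comp
  | |- compb _ (fun x => odd (@?A x)) => apply (compb_odd (A := A)); solve_comp
  | |- compb _ (fun x => ite (@?P x) (@?A x) (@?B x)) =>
        apply (compb_ite' (P := P) (A := A) (B := B)); solve_comp
  | |- compb _ (fun x => bex (@?N x) (@?P x)) =>
        apply (compb_bex (N := N) (P := P)); solve_comp
  | |- compb _ (fun x => ball (@?N x) (@?P x)) =>
        apply (compb_ball (N := N) (P := P)); solve_comp
  | |- compb _ (fun x => ?Q (@?A x)) =>
       first [ apply (comp_compose (f := fun y => nat_of_bool (Q y)) (A := A)); [assumption | solve_comp]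
             | apply comp_orac; solve_comp ]
  | |- cmp _ (fun x => ?f (@?A x)) =>
       apply (comp_compose (f := f) (A := A)); [assumption | solve_comp]
  end ].


Fixpoint lcode (l : seq nat) : nat :=
  match l with [::] => 0 | a :: l => (cpair a (lcode l)).+1 end.
Definition tl w := psnd w.-1.
Definition hd w := pfst w.-1.
Definition inN w j := iter j tl w != 0.
Definition eltN w j := hd (iter j tl w).
Definition exN w (P : nat -> bool) := bex w (fun j => inN w j && P (eltN w j)).
Definition memN v w := exN w (fun K => K == v).

Lemma tl_cons a l : tl (lcode (a :: l)) = lcode l.
Proof. by rewrite /tl /= psnd_cpair. Qed.
Lemma hd_cons a l : hd (lcode (a :: l)) = a.
Proof. by rewrite /hd /= pfst_cpair. Qed.
Lemma tl0 : tl 0 = 0.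
Proof. by rewrite /tl /= -(psnd_cpair 0 0). Qed.

Lemma iter_tl j l : iter j tl (lcode l) = lcode (drop j l).
Proof.
elim: j l => [|j IH] l; first by rewrite drop0.
rewrite iterSr; case: l => [|a l] /=.
  by rewrite tl0; have := IH [::].
by rewrite tl_cons IH.
Qed.

Lemma lcode0 l : (lcode l == 0) = (l == [::]).
Proof. by case: l. Qed.

Lemma size_lcode l : size l <= lcode l.
Proof. elim: l => //= a l IH; have := cpair_geq_r a (lcode l); lia. Qed.

Lemma inN_lcode l j : inN (lcode l) j = (j < size l).
Proof. by rewrite /inN iter_tl lcode0 -size_eq0 size_drop subn_eq0 -ltnNge. Qed.

Lemma eltN_lcode l j : j < size l -> eltN (lcode l) j = nth 0 l j.
Proof.
rewrite /eltN iter_tl => Hj.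
by rewrite (drop_nth 0 Hj) hd_cons.
Qed.

Lemma exN_lcode l P : exN (lcode l) P = has P l.
Proof.
rewrite /exN /bex.
apply/hasP/hasP => [[j Hj /andP [Hin HP]]|[x Hx HP]].
  rewrite inN_lcode in Hin; rewrite eltN_lcode // in HP.
  by exists (nth 0 l j) => //; apply: mem_nth.
exists (index x l).
  rewrite mem_iota add0n /=; apply: leq_trans (size_lcode l); by rewrite index_mem.
by rewrite inN_lcode index_mem Hx /= eltN_lcode ?index_mem // nth_index.
Qed.

Lemma memN_lcode v l : memN v (lcode l) = (v \in l).
Proof.
rewrite /memN exN_lcode; apply/hasP/idP => [[x Hx /eqP <-]|H] //.
by exists v.
Qed.

Lemma cmp_inN X W J : cmp X W -> cmp X J -> compb X (fun x => inN (W x) (J x)).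
Proof. move=> HW HJ; rewrite /inN /tl /=. solve_comp. Qed.

Lemma cmp_eltN X W J : cmp X W -> cmp X J -> cmp X (fun x => eltN (W x) (J x)).
Proof. move=> HW HJ; rewrite /eltN /hd /tl /=. solve_comp. Qed.

Lemma compb_compose X Q A : compb X Q -> cmp X A -> compb X (fun x => Q (A x)).
Proof. exact: comp_compose. Qed.

Lemma compb_exN X W (P : nat -> nat -> bool) : cmp X W ->
  compb X (fun z => P (psnd z) (pfst z)) -> compb X (fun x => exN (W x) (P x)).
Proof.
move=> HW HP; rewrite /exN.
apply: (compb_bex (P := fun x j => inN (W x) j && P x (eltN (W x) j))) => //.
apply: compb_and.
  by apply: cmp_inN; [apply: comp_compose HW (comp_z2 X) | apply: comp_z1].
have H := compb_compose HP (comp_cpair (cmp_eltN (comp_compose HW (comp_z2 X)) (comp_z1 X)) (comp_z2 X)).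
apply: comp_ext H => z /=; by rewrite pfst_cpair psnd_cpair.
Qed.

Lemma compb_memN X V W : cmp X V -> cmp X W -> compb X (fun x => memN (V x) (W x)).
Proof.
move=> HV HW; rewrite /memN.
apply: (compb_exN (P := fun x K => K == V x)) => //.
solve_comp.
Qed.

Ltac solve_comp_ext ::=
  lazymatch goal with
  | |- compb _ (fun x => inN (@?W x) (@?J x)) => apply (cmp_inN (W := W) (J := J)); solve_comp
  | |- cmp _ (fun x => eltN (@?W x) (@?J x)) => apply (cmp_eltN (W := W) (J := J)); solve_comp
  | |- compb _ (fun x => exN (@?W x) (@?P x)) => apply (compb_exN (W := W) (P := P)); solve_comp
  | |- compb _ (fun x => memN (@?V x) (@?W x)) => apply (compb_memN (V := V) (W := W)); solve_comp
  end.


Fixpoint cnum (c : code) : nat :=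
  match c with
  | cZero => cpair 0 0 | cSucc => cpair 1 0 | cId => cpair 2 0
  | cFst => cpair 3 0 | cSnd => cpair 4 0 | cOracle => cpair 5 0
  | cComp f g => cpair 6 (cpair (cnum f) (cnum g))
  | cPair f g => cpair 7 (cpair (cnum f) (cnum g))
  | cRec f g => cpair 8 (cpair (cnum f) (cnum g))
  | cMu f => cpair 9 (cnum f)
  end.

Definition jd c x y := cpair c (cpair x y).

Definition justG (ex : (nat -> bool) -> bool) (mem : nat -> bool) (J : nat) : bool :=
  [|| (pfst (pfst J) == 0) && (psnd (psnd J) == 0),
      (pfst (pfst J) == 1) && (psnd (psnd J) == (pfst (psnd J)).+1),
      (pfst (pfst J) == 2) && (psnd (psnd J) == pfst (psnd J)),
      (pfst (pfst J) == 3) && (psnd (psnd J) == pfst (pfst (psnd J))),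
      (pfst (pfst J) == 4) && (psnd (psnd J) == psnd (pfst (psnd J))),
      (pfst (pfst J) == 5) && (psnd (psnd J) == 0),
      (pfst (pfst J) == 6) && ex (fun K => (pfst K == psnd (psnd (pfst J))) && (pfst (psnd K) == pfst (psnd J))
                                && mem (jd (pfst (psnd (pfst J))) (psnd (psnd K)) (psnd (psnd J)))),
      (pfst (pfst J) == 7) && mem (jd (pfst (psnd (pfst J))) (pfst (psnd J)) (pfst (psnd (psnd J))))
                           && mem (jd (psnd (psnd (pfst J))) (pfst (psnd J)) (psnd (psnd (psnd J)))),
      (pfst (pfst J) == 8) && ite (psnd (pfst (psnd J)) == 0)
            (mem (jd (pfst (psnd (pfst J))) (pfst (pfst (psnd J))) (psnd (psnd J))))
            (ex (fun K => (pfst K == pfst J)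
                 && (pfst (psnd K) == cpair (pfst (pfst (psnd J))) (psnd (pfst (psnd J))).-1)
                 && mem (jd (psnd (psnd (pfst J)))
                          (cpair (pfst (pfst (psnd J))) (cpair (psnd (pfst (psnd J))).-1 (psnd (psnd K))))
                          (psnd (psnd J)))))
    | (pfst (pfst J) == 9) && mem (jd (psnd (pfst J)) (cpair (pfst (psnd J)) (psnd (psnd J))) 0)
        && ball (psnd (psnd J)) (fun m => ex (fun K => (pfst K == psnd (pfst J))
                 && (pfst (psnd K) == cpair (pfst (psnd J)) m) && (psnd (psnd K) != 0)))].

Definition justN J w := justG (exN w) (fun v => memN v w) J.
Definition ValidN w := ball w (fun j => ~~ inN w j || justN (eltN w j) (iter j.+1 tl w)).

Lemma cmp_ValidN X : compb X ValidN.
Proof.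
rewrite /ValidN /justN /justG /jd /tl. solve_comp.
Qed.


Definition justL J r := justG (fun P => has P r) (fun v => v \in r) J.
Fixpoint ValidL l := match l with [::] => true | J :: r => justL J r && ValidL r end.

Lemma justN_lcode J r : justN J (lcode r) = justL J r.
Proof.
rewrite /justN /justL.
have -> : exN (lcode r) = fun P => has P r by apply: functional_extensionality => P; rewrite exN_lcode.
have -> : (fun v => memN v (lcode r)) = fun v => v \in r.
  by apply: functional_extensionality => v; rewrite memN_lcode.
by [].
Qed.

Lemma ValidL_nth l : ValidL l = [forall j : 'I_(size l), justL (nth 0 l j) (drop j.+1 l)].
Proof.
elim: l => [|J r IH] /=; first by apply/esym/forallP => [[]].
rewrite IH; apply/andP/forallP => [[H1 /forallP H2] [[|j] Hj] /=|H].
- by rewrite drop0.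
- by have := H2 (Ordinal (Hj : j < size r)).
- split; first by have := H (Ordinal (isT : 0 < (size r).+1)); rewrite /= drop0.
  by apply/forallP => [[j Hj]]; have := H (Ordinal (Hj : j.+1 < (size r).+1)).
Qed.

Lemma ValidN_lcode l : ValidN (lcode l) = ValidL l.
Proof.
rewrite ValidL_nth /ValidN /ball.
apply/allP/forallP => [H [j Hj]|H j].
  have := H j; rewrite mem_iota add0n /=.
  have Hj' : j < lcode l by apply: leq_trans (size_lcode l).
  rewrite Hj' inN_lcode Hj /= eltN_lcode // -iterS iter_tl justN_lcode; by apply.
rewrite mem_iota add0n /= => _.
rewrite inN_lcode; case: (ltnP j (size l)) => //= Hj.
by rewrite eltN_lcode // -iterS iter_tl justN_lcode; exact: (H (Ordinal Hj)).
Qed.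

Lemma justG_mono (ex1 ex2 : (nat -> bool) -> bool) (m1 m2 : nat -> bool) J :
  (forall P Q : nat -> bool, (forall k, P k -> Q k) -> ex1 P -> ex2 Q) -> (forall v, m1 v -> m2 v) ->
  justG ex1 m1 J -> justG ex2 m2 J.
Proof.
move=> He Hm; rewrite /justG.
case: (pfst (pfst J)) => [|[|[|[|[|[|[|[|[|[|t]]]]]]]]]] //=; rewrite ?orbF.
- by apply: He => k /andP [-> /Hm ->].
- by move=> /andP [/Hm -> /Hm ->].
- rewrite /ite; case: ifP => _; first exact: Hm.
  by apply: He => k /andP [-> /Hm ->].
- move=> /andP [/Hm -> H] /=; move: H; rewrite /ball => /allP H.
  apply/allP => m Hm'; by apply: He (H _ Hm') => k /andP [-> ->].
Qed.

Lemma justL_mono J r r' : {subset r <= r'} -> justL J r -> justL J r'.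
Proof.
move=> Hs; apply: justG_mono => [P Q HPQ /hasP [x Hx HP]|v /Hs //].
by apply/hasP; exists x; [apply: Hs | apply: HPQ].
Qed.

Lemma ValidL_cat l1 l2 : ValidL l1 -> ValidL l2 -> ValidL (l1 ++ l2).
Proof.
elim: l1 => //= J r IH /andP [HJ Hr] H2; rewrite IH // andbT.
by apply: justL_mono HJ => v Hv; rewrite mem_cat Hv.
Qed.

Definition sem (J : nat) := forall c, cnum c = pfst J ->
  eval empty_oracle c (pfst (psnd J)) (psnd (psnd J)).

Lemma jdE J : J = jd (pfst J) (pfst (psnd J)) (psnd (psnd J)).
Proof. by rewrite /jd !cpair_unpair. Qed.

Lemma sound l : ValidL l -> forall J, J \in l -> sem J.
Proof.
elim: l => // J r IH /= /andP [HJ Hr] K; rewrite inE => /orP [/eqP ->|]; last exact: IH.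
move=> c Hc; move: HJ; rewrite (jdE J) -Hc.
set x := pfst (psnd J); set y := psnd (psnd J); clearbody x y.
rewrite /justL /justG /jd !(pfst_cpair, psnd_cpair).
case: c {Hc} => [||||||f g|f g|f g|f] /=; rewrite ?(pfst_cpair, psnd_cpair) /= ?orbF.
- move/eqP ->; constructor.
- move/eqP ->; constructor.
- move/eqP ->; constructor.
- move/eqP ->; exact: eval_fst.
- move/eqP ->; exact: eval_snd.
- by move/eqP ->; have := ev_oracle empty_oracle x.
- move=> /hasP [K1 HK1 /andP [/andP [/eqP H1 /eqP H2] H3]].
  have E1 := IH Hr _ HK1 g (esym H1); rewrite H2 in E1.
  have E2 := IH Hr _ H3 f; rewrite /jd !(pfst_cpair, psnd_cpair) in E2.
  exact: ev_comp E1 (E2 erefl).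
- move=> /andP [H1 H2].
  have E1 := IH Hr _ H1 f; have E2 := IH Hr _ H2 g.
  rewrite /jd !(pfst_cpair, psnd_cpair) in E1 E2.
  by rewrite -(cpair_unpair y); apply: ev_pair; [apply: E1 | apply: E2].
- have [a [n Ex]] : exists a n, x = cpair a n by exists (pfst x), (psnd x); rewrite cpair_unpair.
  subst x; rewrite /ite !(pfst_cpair, psnd_cpair).
  case: n => [|n] /=.
    move=> H1; have E1 := IH Hr _ H1 f; rewrite /jd !(pfst_cpair, psnd_cpair) in E1.
    by apply: ev_rec0; apply: E1.
  move=> /hasP [K1 HK1 /andP [/andP [/eqP H1 /eqP H2] H3]].
  have E1 := IH Hr _ HK1 (cRec f g) (esym H1); rewrite H2 in E1.
  have E2 := IH Hr _ H3 g; rewrite /jd !(pfst_cpair, psnd_cpair) in E2.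
  exact: ev_recS E1 (E2 erefl).
- move=> /andP [H1 /allP H2].
  have E1 := IH Hr _ H1 f; rewrite /jd !(pfst_cpair, psnd_cpair) in E1.
  apply: ev_mu; first exact: E1.
  move=> m Hm; have := H2 m; rewrite mem_iota add0n /= => /(_ Hm).
  move=> /hasP [K1 HK1 /andP [/andP [/eqP H3 /eqP H4] H5]].
  have E3 := IH Hr _ HK1 f (esym H3); rewrite H4 in E3.
  by exists (psnd (psnd K1)).-1; rewrite prednK // lt0n.
Qed.

Lemma gather n (A : nat -> seq nat -> Prop) :
  (forall m l l', A m l -> {subset l <= l'} -> A m l') ->
  (forall m, m < n -> exists l, ValidL l /\ A m l) ->
  exists l, ValidL l /\ forall m, m < n -> A m l.
Proof.
move=> Hmono; elim: n => [|n IH] H; first by exists [::].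
case: IH => [m Hm|l1 [V1 H1]]; first by apply: H; lia.
case: (H n (ltnSn n)) => l2 [V2 H2].
exists (l1 ++ l2); split; first exact: ValidL_cat.
move=> m; rewrite ltnS leq_eqVlt => /orP [/eqP ->|Hm].
  by apply: Hmono H2 _ => v Hv; rewrite mem_cat Hv orbT.
by apply: Hmono (H1 _ Hm) _ => v Hv; rewrite mem_cat Hv.
Qed.

Lemma mk1 J r : justL J r -> ValidL r -> exists l, ValidL l /\ J \in l.
Proof. by move=> H1 H2; exists (J :: r); rewrite /= H1 H2 inE eqxx. Qed.

Lemma mk2 (J : nat) l1 l2 : ValidL l1 -> ValidL l2 ->
  (forall r, {subset l1 <= r} -> {subset l2 <= r} -> ValidL r -> justL J r) ->
  exists l, ValidL l /\ J \in l.
Proof.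
move=> V1 V2 H; apply: (mk1 (r := l1 ++ l2)); last exact: ValidL_cat.
apply: H; last exact: ValidL_cat.
- by move=> v Hv; rewrite mem_cat Hv.
- by move=> v Hv; rewrite mem_cat Hv orbT.
Qed.

Lemma complete : forall c x y, eval empty_oracle c x y ->
  exists l, ValidL l /\ jd (cnum c) x y \in l.
Proof.
fix IH 4.
move=> c x y H; destruct H.
- apply: (mk1 (r := [::])) => //; by rewrite /justL /justG /jd !(pfst_cpair, psnd_cpair) /= ?eqxx ?orbT.
- apply: (mk1 (r := [::])) => //; by rewrite /justL /justG /jd !(pfst_cpair, psnd_cpair) /= ?eqxx ?orbT.
- apply: (mk1 (r := [::])) => //; by rewrite /justL /justG /jd !(pfst_cpair, psnd_cpair) /= ?eqxx ?orbT.
- apply: (mk1 (r := [::])) => //; by rewrite /justL /justG /jd !(pfst_cpair, psnd_cpair) /= ?eqxx ?orbT.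
- apply: (mk1 (r := [::])) => //; by rewrite /justL /justG /jd !(pfst_cpair, psnd_cpair) /= ?eqxx ?orbT.
- apply: (mk1 (r := [::])) => //; by rewrite /justL /justG /jd !(pfst_cpair, psnd_cpair) /= ?eqxx ?orbT.
- case: (IH _ _ _ H) => l1 [V1 I1]; case: (IH _ _ _ H0) => l2 [V2 I2].
  apply: (mk2 V1 V2) => r S1 S2 _.
  rewrite /justL /justG /jd !(pfst_cpair, psnd_cpair) /= ?orbF.
  apply/hasP; exists (jd (cnum g) x y); first exact: S1.
  by rewrite /jd !(pfst_cpair, psnd_cpair) !eqxx /=; apply: S2.
- case: (IH _ _ _ H) => l1 [V1 I1]; case: (IH _ _ _ H0) => l2 [V2 I2].
  apply: (mk2 V1 V2) => r S1 S2 _.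
  rewrite /justL /justG /jd !(pfst_cpair, psnd_cpair) /=.
  by rewrite (S1 _ I1) (S2 _ I2).
- case: (IH _ _ _ H) => l1 [V1 I1].
  apply: (mk1 (r := l1)) => //.
  by rewrite /justL /justG /jd /ite !(pfst_cpair, psnd_cpair) /= orbF.
- case: (IH _ _ _ H) => l1 [V1 I1]; case: (IH _ _ _ H0) => l2 [V2 I2].
  apply: (mk2 V1 V2) => r S1 S2 _.
  rewrite /justL /justG /jd /ite !(pfst_cpair, psnd_cpair) /= ?orbF.
  apply/hasP; exists (jd (cnum (cRec f g)) (cpair x n) y); first exact: S1.
  by rewrite /jd !(pfst_cpair, psnd_cpair) !eqxx /=; apply: S2.
- rename H0 into Hlt.
  have Hall : forall m, m < n -> exists l, ValidL l /\
      exists k, jd (cnum f) (cpair x m) k.+1 \in l.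
    move=> m Hm; case: (Hlt m Hm) => k Hk.
    case: (IH _ _ _ Hk) => l [V I]; exists l; split => //; by exists k.
  case: (gather (A := fun m l => exists k, jd (cnum f) (cpair x m) k.+1 \in l) _ Hall).
    by move=> m l l' [k Hk] S; exists k; apply: S.
  move=> l2 [V2 H2].
  case: (IH _ _ _ H) => l1 [V1 I1].
  apply: (mk2 V1 V2) => r S1 S2 _.
  rewrite /justL /justG /jd !(pfst_cpair, psnd_cpair) /=.
  rewrite (S1 _ I1) /=; apply/allP => m; rewrite mem_iota add0n /= => Hm.
  case: (H2 m Hm) => k Hk; apply/hasP; exists (jd (cnum f) (cpair x m) k.+1).
    exact: S2.
  by rewrite /jd !(pfst_cpair, psnd_cpair) !eqxx.
Qed.

Lemma cpair_inj a b c d : cpair a b = cpair c d -> a = c /\ b = d.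
Proof. move=> H; have := unpair_cpair a b; rewrite H unpair_cpair; by case=> -> ->. Qed.

Lemma inv_comp X f g x y : eval X (cComp f g) x y -> exists m, eval X g x m /\ eval X f m y.
Proof. move=> H; inversion H; subst; eauto. Qed.
Lemma inv_pair X f g x y : eval X (cPair f g) x y ->
  exists a b, y = cpair a b /\ eval X f x a /\ eval X g x b.
Proof. move=> H; inversion H; subst; eauto 6. Qed.
Lemma inv_rec X f g w y : eval X (cRec f g) w y ->
  (exists x, w = cpair x 0 /\ eval X f x y) \/
  (exists x n z, w = cpair x n.+1 /\ eval X (cRec f g) (cpair x n) z /\ eval X g (cpair x (cpair n z)) y).
Proof. move=> H; inversion H; subst; [left|right]; eauto 8. Qed.
Lemma inv_mu X f x y : eval X (cMu f) x y ->
  eval X f (cpair x y) 0 /\ (forall m, m < y -> exists k, eval X f (cpair x m) k.+1).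
Proof. move=> H; inversion H; subst; eauto. Qed.

Lemma eval_det X : forall c x y1, eval X c x y1 -> forall y2, eval X c x y2 -> y1 = y2.
Proof.
fix IH 4.
move=> c x y1 H; destruct H => y2 H'.
- by inversion H'.
- by inversion H'.
- by inversion H'.
- inversion H'; subst; match goal with E : cpair _ _ = cpair _ _ |- _ => by case: (cpair_inj E) end.
- inversion H'; subst; match goal with E : cpair _ _ = cpair _ _ |- _ => by case: (cpair_inj E) end.
- by inversion H'.
- case: (inv_comp H') => m [H1 H2].
  have E := IH _ _ _ H _ H1; subst; exact: IH _ _ _ H0 _ H2.
- case: (inv_pair H') => a [b [-> [H1 H2]]].
  by rewrite (IH _ _ _ H _ H1) (IH _ _ _ H0 _ H2).
- case: (inv_rec H') => [[x' [E H1]]|[x' [n [z [E _]]]]].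
    case: (cpair_inj E) => ? _; subst; exact: IH _ _ _ H _ H1.
  by case: (cpair_inj E).
- case: (inv_rec H') => [[x' [E H1]]|[x' [n' [z' [E [H1 H2]]]]]].
    by case: (cpair_inj E).
  case: (cpair_inj E) => ? /succn_inj ?; subst.
  have E' := IH _ _ _ H _ H1; subst; exact: IH _ _ _ H0 _ H2.
- case: (inv_mu H') => H1 H2.
  case: (ltngtP n y2) => // Hn.
  + case: (H2 _ Hn) => k Hk; by have := IH _ _ _ H _ Hk.
  + case: (H0 _ Hn) => k Hk.
    by have := IH _ _ _ Hk _ H1.
Qed.

Definition sumset B (P : nat -> bool) :=
  prec 0 (fun k acc => acc + nat_of_bool (P k) * 2 ^ k) B.

Lemma canset_small c x : c < 2 ^ x -> canset c x = false.
Proof. by move=> H; rewrite /canset divn_small. Qed.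

Lemma canset_lt c x : canset c x -> x < c.
Proof.
move=> H; case: (ltnP x c) => // Hc.
have : c < 2 ^ x by apply: leq_ltn_trans Hc (ltn_expl _ (isT : 1 < 2)).
by move/canset_small; rewrite H.
Qed.

Lemma canset_add c k x : c < 2 ^ k ->
  canset (c + 2 ^ k) x = (x == k) || (x < k) && canset c x.
Proof.
move=> Hc; rewrite /canset.
case: (ltngtP x k) => Hx /=.
- have E : 2 ^ k = 2 ^ (k - x) * 2 ^ x by rewrite -expnD subnK // ltnW.
  rewrite E divnDMl ?expn_gt0 // oddD.
  have -> : odd (2 ^ (k - x)) = false.
    by rewrite oddX /= subn_eq0 leqNgt Hx.
  by rewrite addbF.
- rewrite divn_small //.
  apply: (@leq_trans (2 ^ k.+1)); last by rewrite leq_exp2l.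
  by rewrite expnS; lia.
- subst x; rewrite -{1}(mul1n (2 ^ k)) divnDMl ?expn_gt0 // divn_small //.
Qed.

Lemma sumset_lt B P : sumset B P < 2 ^ B.
Proof.
elim: B => [|B IH] //; rewrite /sumset /= -/(sumset B P) expnS.
case: (P B) => /=; lia.
Qed.

Lemma canset_sumset B P x : canset (sumset B P) x = (x < B) && P x.
Proof.
elim: B => [|B IH].
  by rewrite /sumset /= /canset div0n.
rewrite /sumset /= -/(sumset B P).
rewrite ltnS.
case HP: (P B) => /=.
- rewrite mul1n canset_add ?sumset_lt // IH.
  case: (ltngtP x B) => Hx //=; subst x; by rewrite HP.
- rewrite mul0n addn0 IH.
  case: (ltngtP x B) => Hx //=; subst x; by rewrite HP.
Qed.

Lemma lcode_surj w : exists l, lcode l = w.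
Proof.
elim: w {-2}w (leqnn w) => [|n IH] w Hw; first by exists [::]; case: w Hw.
case: w Hw => [|w] Hw; first by exists [::].
have [a [r E]] : exists a r, w = cpair a r by exists (pfst w), (psnd w); rewrite cpair_unpair.
have Hr : r <= n by have := cpair_geq_r a r; lia.
case: (IH r Hr) => l Hl; exists (a :: l); by rewrite /= Hl E.
Qed.

Lemma bcountS n P : bcount n.+1 P = bcount n P + P n.
Proof. by rewrite /bcount iotaSr -cats1 count_cat /= addn0. Qed.

Lemma bcount_mono m n P : m <= n -> bcount m P <= bcount n P.
Proof.
move=> H; rewrite -(subnKC H); elim: (n - m) => [|k IH]; first by rewrite addn0.
rewrite addnS bcountS; lia.
Qed.

Lemma cnt_ex H : infinite_set H -> forall n, exists x, n < bcount x.+1 H.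
Proof.
move=> Hinf; elim=> [|n [x Hx]].
  case: (Hinf 0) => x [_ Hx]; exists x; rewrite bcountS Hx; lia.
case: (Hinf x.+1) => y [Hy HHy]; exists y.
rewrite bcountS HHy; have := bcount_mono H Hy; lia.
Qed.

Definition pH H (Hinf : infinite_set H) n : nat := ex_minn (cnt_ex Hinf n).

Lemma pH_spec H (Hinf : infinite_set H) n :
  bcount (pH Hinf n) H = n /\ H (pH Hinf n).
Proof.
rewrite /pH; case: ex_minnP => m Hm Hmin.
have Hle : bcount m H <= n.
  case: m Hm Hmin => [|m] Hm Hmin; first by rewrite /bcount.
  case: (leqP (bcount m.+1 H) n) => // Hlt; have := Hmin m Hlt; lia.
move: Hm; rewrite bcountS; case: (H m) => /=; lia.
Qed.

Lemma pH_min H (Hinf : infinite_set H) n m : n < bcount m.+1 H -> pH Hinf n <= m.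
Proof. rewrite /pH; case: ex_minnP => k _ Hmin; exact: Hmin. Qed.

Lemma pH_enum H (Hinf : infinite_set H) : enumerates (pH Hinf) H.
Proof.
split.
  move=> n; case: (pH_spec Hinf n) => E1 _; case: (pH_spec Hinf n.+1) => E2 _.
  case: (ltnP (pH Hinf n) (pH Hinf n.+1)) => // Hle.
  have := bcount_mono H Hle; lia.
move=> x; split => [Hx|[n <-]]; last by case: (pH_spec Hinf n).
exists (bcount x H).
have H1 : pH Hinf (bcount x H) <= x by apply: pH_min; rewrite bcountS Hx; lia.
case: (pH_spec Hinf (bcount x H)) => E HH.
case: (ltnP (pH Hinf (bcount x H)) x) => Hlt; last by apply/eqP; rewrite eqn_leq H1.
have := bcount_mono H Hlt; rewrite bcountS HH; lia.
Qed.

Lemma pH_cmp X H (Hinf : infinite_set H) : compb X H -> cmp X (pH Hinf).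
Proof.
move=> HH.
apply: (comp_mu (F := fun n m => nat_of_bool (bcount m.+1 H <= n))).
  solve_comp.
move=> n; split.
  case: (pH_spec Hinf n) => E HHp; rewrite bcountS E HHp; apply/eqP; rewrite eqb0 -ltnNge; lia.
move=> m Hm; case: (leqP (bcount m.+1 H) n) => //= Hlt.
have := pH_min Hinf Hlt; lia.
Qed.

Definition good i b x := bex b.+1 (fun w => ValidN w && memN (jd i x 1) w).
Definition Dset i b := sumset b.+1 (good i b).
Definition Dfun (p : nat -> nat) e :=
  ite (odd e) (e %/ 2) (Dset (pfst (e %/ 2)) (p (psnd (e %/ 2)))).

Lemma Dfun_numbering p : numbering (Dfun p).
Proof.
move=> s.
pose B := (foldr maxn 0 s).+1.
exists (sumset B (fun x => x \in s)).*2.+1 => x.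
have E : forall c, c.*2.+1 %/ 2 = c.
  by move=> c; rewrite -muln2 -addn1 divnMDl // divn_small // addn0.
rewrite /Dfun /ite /= odd_double /= E.
rewrite canset_sumset; case Hx: (x \in s); rewrite ?andbF // andbT /B ltnS.
elim: s Hx {B} => //= a s IH; rewrite inE => /orP [/eqP ->|Hx]; first exact: leq_maxl.
apply: leq_trans (IH Hx) (leq_maxr _ _).
Qed.

Lemma Dfun_computes X p : cmp X p -> computes_numbering X (Dfun p).
Proof.
move=> Hp; have HV := cmp_ValidN X.
have HD : cmp X (Dfun p).
  rewrite /Dfun /Dset /sumset /good /jd; solve_comp.
split; last exact: HD.
have Hc : cmp X (fun z => nat_of_bool (canset (Dfun p (pfst z)) (psnd z))).
  rewrite /canset; solve_comp.
case: Hc => c Hc; exists c => a b; by have := Hc (cpair a b); rewrite pfst_cpair psnd_cpair.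
Qed.

Lemma bex_mono m n (P Q : nat -> bool) : m <= n -> (forall x, P x -> Q x) -> bex m P -> bex n Q.
Proof.
move=> Hmn HPQ /hasP [x Hx HP]; apply/hasP; exists x; last exact: HPQ.
by move: Hx; rewrite !mem_iota !add0n /= => /leq_trans; apply.
Qed.

Lemma good_mono i b b' x : b <= b' -> good i b x -> good i b' x.
Proof. by move=> H; apply: bex_mono. Qed.

Lemma good_sound c i b x (R : nat -> bool) : cnum c = i ->
  (forall x, eval empty_oracle c x (nat_of_bool (R x))) -> good i b x -> R x.
Proof.
move=> Hi HR /hasP [w _ /andP [HV Hm]].
case: (lcode_surj w) => l El; subst w.
rewrite ValidN_lcode in HV; rewrite memN_lcode in Hm.
have := sound HV Hm (c := c); rewrite /jd !(pfst_cpair, psnd_cpair) => /(_ Hi) E1.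
by have := eval_det E1 (HR x); case: (R x).
Qed.

Lemma good_compl c i x (R : nat -> bool) : cnum c = i ->
  (forall x, eval empty_oracle c x (nat_of_bool (R x))) -> R x ->
  exists b0, forall b, b0 <= b -> good i b x.
Proof.
move=> Hi HR Hx.
have E : eval empty_oracle c x 1 by have := HR x; rewrite Hx.
case: (complete E) => l [HV Hm].
exists (lcode l) => b Hb; apply/hasP; exists (lcode l).
  by rewrite mem_iota add0n /=; lia.
by rewrite ValidN_lcode memN_lcode HV -Hi.
Qed.

Lemma bcount_split m y n P : m <= y -> y < n -> bcount m P + P y <= bcount n P.
Proof.
move=> H1 H2; apply: (@leq_trans (bcount y.+1 P)); last exact: bcount_mono.
rewrite bcountS leq_add2r; exact: bcount_mono.
Qed.

Definition cntg i b := bcount b.+1 (good i b).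

Lemma cntg_mono i b b' : b <= b' -> cntg i b <= cntg i b'.
Proof.
move=> H; rewrite /cntg.
apply: (@leq_trans (bcount b'.+1 (good i b))); first exact: bcount_mono.
rewrite /bcount; apply: sub_count => x; exact: good_mono.
Qed.

Lemma cntg_unb c i (R : nat -> bool) : cnum c = i ->
  (forall x, eval empty_oracle c x (nat_of_bool (R x))) -> infinite_set R ->
  forall K, exists b, K <= cntg i b.
Proof.
move=> Hi HR Hinf; elim=> [|K [b Hb]]; first by exists 0.
case: (Hinf b.+1) => x [Hbx Rx].
case: (good_compl Hi HR Rx) => b0 Hb0.
exists (maxn b0 x).
have G : good i (maxn b0 x) x by apply: Hb0; exact: leq_maxl.
have H1 := @bcount_split b.+1 x (maxn b0 x).+1 (good i (maxn b0 x)) Hbx (leq_maxr b0 x).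
rewrite G in H1.
have H2 : cntg i b <= bcount b.+1 (good i (maxn b0 x)).
  rewrite /cntg /bcount; apply: sub_count => y; apply: good_mono; lia.
rewrite /cntg; lia.
Qed.

Lemma Dfun_pandemic (p : nat -> nat) :
  (forall g, recursive g -> forall N, exists n, N <= n /\ g n < p n) -> pandemic (Dfun p).
Proof.
move=> Hesc; exists (fun e => e.+2); split.
  split; first by rewrite /recursive; solve_comp.
  split; first by move=> m n H; rewrite ltnS.
  split; last by [].
  move=> N; exists N; lia.
move=> R Hinf [c Hc] N.
set i := cnum c.
have HR : forall x, eval empty_oracle c x (nat_of_bool (R x)) by [].
have Hunb := cntg_unb (erefl i) HR Hinf.
pose g := fun n => ex_minn (Hunb ((cpair i n) * 2 + 2)).
have Hg : recursive g.
  apply: (comp_mu (F := fun n b => nat_of_bool (cntg i b < (cpair i n) * 2 + 2))).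
    have HV := cmp_ValidN empty_oracle.
    rewrite /cntg /good /jd; solve_comp.
  move=> n; rewrite /g; case: ex_minnP => m Hm Hmin; split.
    by apply/eqP; rewrite eqb0 -leqNgt.
  move=> k Hk; case: (ltnP (cntg i k) (cpair i n * 2 + 2)) => // Hle.
  have := Hmin k Hle; lia.
case: (Hesc g Hg N) => n [HNn Hgn].
have Hgspec : cpair i n * 2 + 2 <= cntg i (g n) by rewrite /g; case: ex_minnP.
have Hcnt : cpair i n * 2 + 2 <= cntg i (p n).
  apply: leq_trans Hgspec (cntg_mono _ _); exact: ltnW.
exists (cpair i n * 2).
have E1 : odd (cpair i n * 2) = false by rewrite muln2 odd_double.
have E2 : cpair i n * 2 %/ 2 = cpair i n by rewrite mulnK.
have HD : forall x, canset (Dfun p (cpair i n * 2)) x = (x < (p n).+1) && good i (p n) x.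
  move=> x; rewrite /Dfun /ite E1 E2 pfst_cpair psnd_cpair /Dset canset_sumset //.
split; first by have := cpair_geq_r i n; lia.
split.
  exists [seq x <- iota 0 (p n).+1 | good i (p n) x]; split; first by apply: filter_uniq; apply: iota_uniq.
  split; first by rewrite size_filter; move: Hcnt; rewrite /cntg /bcount addn2.
  apply/allP => x; rewrite mem_filter mem_iota add0n /= HD => /andP [H1 H2].
  by rewrite H1 H2.
move=> x; rewrite HD => /andP [_ Hx].
exact: (good_sound (erefl i) HR Hx).
Qed.

Lemma dir_left X : (exists H, set_computable_in X H /\ hyperimmune H) ->
  exists D, numbering D /\ computes_numbering X D /\ pandemic D.
Proof.
move=> [H [HH [Hinf Hhyp]]].
exists (Dfun (pH Hinf)); split; first exact: Dfun_numbering.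
split; first by apply: Dfun_computes; apply: pH_cmp.
apply: Dfun_pandemic => g Hg N.
apply: NNPP => Hno; apply: (Hhyp _ (pH_enum Hinf)); exists g; split => //.
exists N => n Hn; case: (leqP (pH Hinf n) (g n)) => // Hlt.
by exfalso; apply: Hno; exists n.
Qed.

Lemma incr_mono (p : nat -> nat) : (forall n, p n < p n.+1) -> forall m n, m <= n -> p m <= p n.
Proof.
move=> Hp m n H; rewrite -(subnKC H); elim: (n - m) => [|k IH]; first by rewrite addn0.
rewrite addnS; apply: leq_trans IH (ltnW (Hp _)).
Qed.

Lemma range_le (p f : nat -> nat) : (forall n, p n < p n.+1) -> (forall n, f n < f n.+1) ->
  (forall m, exists k, f k = p m) -> forall n, f n <= p n.
Proof.
move=> Hp Hf Hr.
have : forall n, exists k, n <= k /\ f k = p n.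
  elim=> [|n [k [Hk Ek]]]; first by case: (Hr 0) => k Ek; exists k.
  case: (Hr n.+1) => k' Ek'; exists k'; split => //.
  case: (ltnP k k') => Hle; first lia.
  have := incr_mono Hf Hle; have := Hp n; lia.
move=> H n; case: (H n) => k [Hk <-]. exact: (@incr_mono f Hf n k Hk).
Qed.

Definition ffun (D : nat -> nat) n := prec (D 0).+1 (fun k acc => acc + (D k.+1).+1) n.

Lemma ffun_incr D n : ffun D n < ffun D n.+1.
Proof. rewrite /ffun /=; lia. Qed.

Lemma ffun_ge D n : n < ffun D n.
Proof. elim: n => [|n IH] //; have := ffun_incr D n; lia. Qed.

Lemma ffun_D D e n : e <= n -> D e < ffun D n.
Proof.
elim: n => [|n IH] He; first by move: He; rewrite leqn0 => /eqP ->; rewrite /ffun /=.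
move: He; rewrite leq_eqVlt => /orP [/eqP ->|He].
  rewrite /ffun /=; lia.
have := IH He; have := ffun_incr D n; lia.
Qed.

Definition Hset D x := bex x.+1 (fun n => ffun D n == x).

Lemma Hset_iff D x : Hset D x <-> exists n, ffun D n = x.
Proof.
split => [/hasP [n _ /eqP E]|[n E]]; first by exists n.
apply/hasP; exists n; last by rewrite E.
rewrite mem_iota add0n /=; have := ffun_ge D n; lia.
Qed.

Definition Gmax (g : nat -> nat) j := prec (g 0) (fun k acc => ite (acc <= g k.+1) (g k.+1) acc) j.

Lemma Gmax_ge g e j : e <= j -> g e <= Gmax g j.
Proof.
elim: j => [|j IH] He; first by move: He; rewrite leqn0 => /eqP ->.
rewrite /Gmax /= -/(Gmax g j) /ite.
move: He; rewrite leq_eqVlt => /orP [/eqP ->|He].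
  by case: ifP => // /negbT; rewrite -ltnNge => /ltnW.
have := IH He; case: ifP => //; lia.
Qed.

Lemma wmono (q : nat -> nat) : (forall n, q n <= q n.+1) -> forall m n, m <= n -> q m <= q n.
Proof.
move=> Hq m n H; rewrite -(subnKC H); elim: (n - m) => [|k IH]; first by rewrite addn0.
rewrite addnS; apply: leq_trans IH (Hq _).
Qed.

Lemma Gmax_mono g m n : m <= n -> Gmax g m <= Gmax g n.
Proof.
apply: wmono => j; rewrite /Gmax /= -/(Gmax g j) /ite; case: ifP => //; lia.
Qed.

Lemma dir_right X : (exists D, numbering D /\ computes_numbering X D /\ pandemic D) ->
  exists H, set_computable_in X H /\ hyperimmune H.
Proof.
move=> [D [_ [[_ HD] [h [[Hhrec [Hhmono [Hhunb Hh0]]] Hend]]]]].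
exists (Hset D); split.
  rewrite /set_computable_in /Hset /ffun; solve_comp.
split.
  move=> N; exists (ffun D N); split; first exact: ltnW (ffun_ge D N).
  by apply/Hset_iff; exists N.
move=> p [Hp Hpr] [g [Hg [N HN]]].
have Epf : forall n, p n = ffun D n.
  have Hf := ffun_incr D.
  move=> n; apply/eqP; rewrite eqn_leq; apply/andP; split.
    apply: range_le => // m; case: ((Hpr (ffun D m)).1).
      by apply/Hset_iff; exists m.
    by move=> k Ek; exists k.
  apply: range_le => // m; case: (Hset_iff D (p m)).1.
    by apply/Hpr; exists m.
  by move=> k Ek; exists k.
have Hex : forall k, exists e, k.+2 <= h e.
  by move=> k; case: (Hhunb k.+2) => e He; exists e.
pose E := fun k => ex_minn (Hex k).
have HE : recursive E.
  apply: (comp_mu (F := fun k e => nat_of_bool (h e < k.+2))).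
    solve_comp.
  move=> k; rewrite /E; case: ex_minnP => m Hm Hmin; split.
    by apply/eqP; rewrite eqb0 -leqNgt.
  move=> j Hj; case: (ltnP (h j) k.+2) => // Hle.
  have := Hmin j Hle; lia.
have HhE : forall k, k.+2 <= h (E k) by move=> k; rewrite /E; case: ex_minnP.
clearbody E.
pose r := fun k => Gmax g (E k) + k.
pose R := fun x => bex x.+1 (fun k => r k == x).
have Rrec : recursive_set R.
  rewrite /recursive_set /set_computable_in /R /r /Gmax; solve_comp.
have Rinf : infinite_set R.
  move=> M; exists (r M); split; first by rewrite /r; lia.
  apply/hasP; exists M; last by [].
  by rewrite mem_iota add0n /r /=; lia.
case: (Hend R Rinf Rrec N) => e [HNe [[s [Hu [Hsz Hall]]] Hsub]].
have Hsub2 : {subset s <= map r (iota 0 (h e).-1)}.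
  move=> x Hx.
  have Hc : canset (D e) x by move/allP: Hall => /(_ x Hx).
  have Hxlt : x < Gmax g e.
    have H1 := canset_lt Hc; have H2 := ffun_D D (leqnn e).
    have H3 := HN e HNe; rewrite Epf in H3.
    have H4 := Gmax_ge g (leqnn e); lia.
  have : R x by apply: Hsub.
  move=> /hasP [k _ /eqP Ek].
  apply/mapP; exists k => //.
  rewrite mem_iota add0n /=.
  have HEk : E k < e.
    case: (ltnP (E k) e) => // Hle.
    have HH := Gmax_mono g Hle; rewrite /r in Ek; exfalso; lia.
  have := HhE k; have := Hhmono _ _ (ltnW HEk); lia.
have := uniq_leq_size Hu Hsub2; rewrite size_map size_iota.
move=> H2; have H3 := leq_trans Hsz H2; have := Hhmono _ _ (leq0n e); lia.
Qed.


Unset Implicit Arguments.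

Theorem mainTheorem14 (X : oracle) :
  (exists D : nat -> nat, numbering D /\ computes_numbering X D /\ pandemic D) <->
  (exists H : nat -> bool, set_computable_in X H /\ hyperimmune H).
Proof.
split; [exact: dir_right | exact: dir_left].
Qed.
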